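(* Let $T=(V,E)$ be a tree shape and $k$ a positive integer such that for every choice of root $u_0\in V$ there is a root-to-leaf path in $T$ containing at least $k$ turning points. Then any growth process for $T$ starting from a single node in the connectivity graph model requires at least $k-1$ time steps.
   Context: Shapes. Grid points are integer pairs $(x,y)$; two grid points are adjacent if they are at orthogonal (Manhattan) distance $1$. A shape $S=(V,E)$ is a finite connected graph whose nodes occupy distinct grid points and whose edges join only pairs of nodes occupying adjacent points; shapes are considered up to translation. Growth operations. One node, the anchor $u_0$, is stationary; other nodes move relative to it, and a tree is rooted at $u_0$. A growth operation on a node $u$ toward an adjacent grid point $p$ either (i) if $u$ has no edge to $p$, creates a new node $u'$ at $p$ with edge $uu'$; or (ii) if $p$ is occupied by a node $v$ with $uv\in E$, creates a new node $u'$ at $p$, replaces edge $uv$ by edges $uu',u'v$, and translates by one unit, along the axis of $uv$, the part of the tree hanging from whichever of $u,v$ is farther from $u_0$, away from the other endpoint. In one time step a set of operations is applied concurrently, each node receiving at most one operation and all operations having the same cardinal direction; the displacement of each node is the sum of the unit vectors contributed by the operations on its path to $u_0$. The set is collision-free if no two nodes collide during these motions or end at the same point. Growth processes (connectivity graph model). A growth process from an initial shape $S_0$ performs time steps $t=1,2,\dots$, each applying a collision-free set of growth operations to the current shape; no edges are deleted and no edges are created other than by the operations. It grows $S$ from $S_0$ in $t_f$ time steps if the shape obtained after step $t_f$ is $S$. A node $w$ of a path is a turning point of the path if it is an endpoint or its two path-neighbors $v_1,v_2$ satisfy $v_1w\perp wv_2$. *)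

(* Defs.v *)
From Stdlib Require Import ZArith List Bool.
Import ListNotations.
Open Scope Z_scope.

Definition pt : Type := (Z * Z)%type.
Definition padd (a b : pt) : pt := (fst a + fst b, snd a + snd b).
Definition psub (a b : pt) : pt := (fst a - fst b, snd a - snd b).
Definition pt_eqb (a b : pt) : bool := (fst a =? fst b) && (snd a =? snd b).
Definition inb (a : pt) (l : list pt) : bool := existsb (pt_eqb a) l.

Definition adjacent (a b : pt) : Prop :=
  Z.abs (fst a - fst b) + Z.abs (snd a - snd b) = 1.

Definition cardinal (d : pt) : Prop :=
  d = (1, 0) \/ d = (-1, 0) \/ d = (0, 1) \/ d = (0, -1).

(** * Shapes.  Nodes are identified with the distinct grid points they
    occupy; [edg] is the (boolean) edge relation. *)
Record shape := mkShape { pts : list pt ; edg : pt -> pt -> bool }.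

Definition shape_wf (S : shape) : Prop :=
  (forall x y, edg S x y = edg S y x) /\
  (forall x y, edg S x y = true -> In x (pts S) /\ In y (pts S) /\ adjacent x y).

Fixpoint chain (S : shape) (p : list pt) : Prop :=
  match p with
  | x :: ((y :: _) as t) => edg S x y = true /\ chain S t
  | _ => True
  end.

Definition is_path (S : shape) (p : list pt) : Prop :=
  p <> [] /\ NoDup p /\ (forall x, In x p -> In x (pts S)) /\ chain S p.

Definition path_from_to (S : shape) (p : list pt) (a b : pt) : Prop :=
  is_path S p /\ hd a p = a /\ last p a = b.

Definition connected (S : shape) : Prop :=
  forall a b, In a (pts S) -> In b (pts S) -> exists p, path_from_to S p a b.

Definition has_cycle (S : shape) : Prop :=
  exists c x, (3 <= length c)%nat /\ is_path S c /\ edg S (last c x) (hd x c) = true.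

Definition is_shape (S : shape) : Prop :=
  pts S <> [] /\ shape_wf S /\ connected S.

Definition tree_shape (S : shape) : Prop := is_shape S /\ ~ has_cycle S.

Definition shape_equiv (S T : shape) : Prop :=
  exists t : pt,
    (forall q, In q (pts S) <-> In (padd q t) (pts T)) /\
    (forall x y, edg S x y = edg T (padd x t) (padd y t)).

Definition perp (v1 w v2 : pt) : bool :=
  let a := psub w v1 in let b := psub v2 w in
  fst a * fst b + snd a * snd b =? 0.

Fixpoint interior_turns (p : list pt) : nat :=
  match p with
  | a :: ((b :: c :: _) as t) => ((if perp a b c then 1 else 0) + interior_turns t)%nat
  | _ => 0%nat
  end.

(** number of turning points of a path (endpoints always count) *)
Definition turning_count (p : list pt) : nat :=
  match p with
  | [] => 0%nat
  | [_] => 1%nat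
  | _ => (2 + interior_turns p)%nat
  end.

(** root-to-leaf path of the tree S rooted at u0: a path starting at u0 and
    ending at a node w with no children (all neighbours of w lie on the path) *)
Definition root_to_leaf_path (S : shape) (u0 : pt) (p : list pt) : Prop :=
  is_path S p /\ hd u0 p = u0 /\
  (forall z, edg S (last p u0) z = true -> In z p).

(** Data of a time step on shape S: a common cardinal direction d, the
    anchor a0, the list U of nodes receiving an operation (each node at most
    one operation; the operation on u is toward p = u + d), and the
    displacement D of every old node. *)

(** the edge {x,y} of S is subdivided by an operation of kind (ii) *)
Definition subdiv (S : shape) (d : pt) (U : list pt) (x y : pt) : bool :=
  edg S x y &&
  ((inb x U && pt_eqb y (padd x d)) || (inb y U && pt_eqb x (padd y d))).

(** contribution of the edge traversed from x (closer to u0) to y: if the edge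
    is subdivided, y's side is translated away from x by the unit vector y - x *)
Definition contrib (S : shape) (d : pt) (U : list pt) (x y : pt) : pt :=
  if subdiv S d U x y then psub y x else (0, 0).

Fixpoint path_disp (S : shape) (d : pt) (U : list pt) (p : list pt) : pt :=
  match p with
  | x :: ((y :: _) as t) => padd (contrib S d U x y) (path_disp S d U t)
  | _ => (0, 0)
  end.

(** the operation on u is of kind (ii) (u has an edge to p = u + d) *)
Definition kind2 (S : shape) (d u : pt) : bool := edg S u (padd u d).

(** linear motions a + t*da and b + t*db meet for some t in [0,1] *)
Definition collide (a da b db : pt) : Prop :=
  exists n m : Z, 0 <= n <= m /\ 0 < m /\
    m * (fst a - fst b) = n * (fst db - fst da) /\
    m * (snd a - snd b) = n * (snd db - snd da).

Definition step (S S' : shape) : Prop :=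
  exists (d a0 : pt) (U : list pt) (D : pt -> pt),
    cardinal d /\ In a0 (pts S) /\
    (forall u, In u U -> In u (pts S)) /\
    (forall w p, In w (pts S) -> path_from_to S p a0 w -> D w = path_disp S d U p) /\
    (* collision-freeness: old nodes move linearly from w to w + D w;
       a new node of kind (i) is created at u + d and moves rigidly with u *)
    (forall w1 w2, In w1 (pts S) -> In w2 (pts S) -> w1 <> w2 ->
        ~ collide w1 (D w1) w2 (D w2)) /\
    (forall w u, In w (pts S) -> In u U -> kind2 S d u = false ->
        ~ collide w (D w) (padd u d) (D u)) /\
    (forall u1 u2, In u1 U -> In u2 U -> u1 <> u2 ->
        kind2 S d u1 = false -> kind2 S d u2 = false ->
        ~ collide (padd u1 d) (D u1) (padd u2 d) (D u2)) /\
    (* no two nodes end at the same point; the new node u' created by the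
       operation on u ends at (u + D u) + d *)
    (forall w u, In w (pts S) -> In u U -> padd w (D w) <> padd (padd u (D u)) d) /\
    (forall u1 u2, In u1 U -> In u2 U -> u1 <> u2 ->
        padd (padd u1 (D u1)) d <> padd (padd u2 (D u2)) d) /\
    (forall q, In q (pts S') <->
        ((exists w, In w (pts S) /\ q = padd w (D w)) \/
         (exists u, In u U /\ q = padd (padd u (D u)) d))) /\
    (forall x y, edg S' x y = true <->
        ((exists a b, edg S a b = true /\ subdiv S d U a b = false /\
                      x = padd a (D a) /\ y = padd b (D b)) \/
         (exists u, In u U /\
            ((x = padd u (D u) /\ y = padd (padd u (D u)) d) \/
             (y = padd u (D u) /\ x = padd (padd u (D u)) d))) \/
         (exists u, In u U /\ kind2 S d u = true /\
            ((x = padd (padd u (D u)) d /\ y = padd (padd u d) (D (padd u d))) \/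
             (y = padd (padd u (D u)) d /\ x = padd (padd u d) (D (padd u d))))))).

Definition single_node (S : shape) : Prop :=
  exists p, pts S = [p] /\ forall x y, edg S x y = false.

Definition grows_from_single (T : shape) (tf : nat) : Prop :=
  exists Sq : nat -> shape,
    single_node (Sq 0%nat) /\
    (forall i, (i < tf)%nat -> step (Sq i) (Sq (S i))) /\
    shape_equiv (Sq tf) T.

(* Main.v *)
Require Import Defs.
From Stdlib Require Import ZArith List Lia Classical FinFun.
Import ListNotations.
Open Scope Z_scope.

Lemma pt_eq_iff (a b : pt) : a = b <-> fst a = fst b /\ snd a = snd b.
Proof.
  destruct a, b; simpl; split; [intros H; inversion H; auto | intros [-> ->]; auto].
Qed.

Ltac ptsplit :=
  repeat match goal with
  | H : @eq pt _ _ |- _ => apply pt_eq_iff in H; destruct H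
  | H : @eq (Z*Z)%type _ _ |- _ => apply pt_eq_iff in H; destruct H
  end.
Ltac ptZ := ptsplit; try (apply pt_eq_iff; split); unfold padd, psub in *; cbn [fst snd] in *; lia.

Definition pt_eq_dec (a b : pt) : {a = b} + {a <> b}.
Proof. decide equality; apply Z.eq_dec. Qed.

Lemma pt_eqb_refl a : pt_eqb a a = true.
Proof. unfold pt_eqb; rewrite !Z.eqb_refl; reflexivity. Qed.

Lemma inb_In a l : In a l -> inb a l = true.
Proof.
  intros H; unfold inb; apply existsb_exists; exists a; split; auto; apply pt_eqb_refl.
Qed.

Lemma NoDup_app_disj {A} (l1 l2 : list A) x : NoDup (l1 ++ l2) -> In x l2 -> ~ In x l1.
Proof.
  intros H Hx. apply in_split in Hx as [u [v ->]].
  rewrite app_assoc in H. apply NoDup_remove_2 in H. intro; apply H; apply in_or_app; left; apply in_or_app; auto.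
Qed.

Lemma last_default {A} (a : A) l d1 d2 : last (a :: l) d1 = last (a :: l) d2.
Proof. revert a; induction l; simpl; auto. intros; apply IHl. Qed.

Lemma chain_app S l1 l2 : chain S (l1 ++ l2) -> chain S l1 /\ chain S l2.
Proof.
  induction l1 as [|a l1 IH]; simpl; auto.
  destruct l1 as [|b l1]; simpl in *.
  - destruct l2; simpl; intuition.
  - intros [H1 H2]; apply IH in H2; intuition.
Qed.

Lemma chain_snoc S l x d : chain S l -> l <> [] -> edg S (last l d) x = true -> chain S (l ++ [x]).
Proof.
  induction l as [|a l IH]; simpl; [congruence|].
  destruct l as [|b l]; simpl; auto.
  intros [H1 H2] _ H3; split; auto. apply IH; auto; congruence.
Qed.

Lemma chain_last S l x d : chain S (l ++ [x]) -> l <> [] -> edg S (last l d) x = true.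
Proof.
  induction l as [|a l IH]; simpl; [congruence|].
  destruct l as [|b l]; simpl; [tauto|].
  intros [H1 H2] _; apply IH; auto; congruence.
Qed.

Lemma NoDup_snoc {A} (l : list A) x : NoDup l -> ~ In x l -> NoDup (l ++ [x]).
Proof.
  intros. apply NoDup_app; auto. constructor; auto; constructor.
  intros a Ha [<-|[]]; auto.
Qed.

Lemma hd_snoc {A} (l : list A) x d : l <> [] -> hd d (l ++ [x]) = hd d l.
Proof. destruct l; simpl; congruence. Qed.

Definition dotb (e f : pt) : bool := fst e * fst f + snd e * snd f =? 0.
Definition fd (l : list pt) : option pt :=
  match l with a :: b :: _ => Some (psub b a) | _ => None end.
Definition tw (e : pt) (o : option pt) : nat :=
  match o with Some f => if dotb e f then 1%nat else 0%nat | None => 0%nat end.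

Lemma turns_cons a b t :
  interior_turns (a :: b :: t) = (tw (psub b a) (fd (b :: t)) + interior_turns (b :: t))%nat.
Proof. destruct t; reflexivity. Qed.

Inductive Rel : list pt -> list pt -> Prop :=
| R1 w x : Rel [w] [x]
| R2 a b t x y t' : Rel (b::t) (y::t') -> psub y x = psub b a -> Rel (a::b::t) (x::y::t')
| R3 a b t x m y t' : Rel (b::t) (y::t') -> psub m x = psub b a -> psub y m = psub b a ->
    dotb (psub b a) (psub b a) = false -> Rel (a::b::t) (x::m::y::t').

Lemma Rel_fd q p : Rel q p -> fd p = fd q.
Proof. intros H; inversion H; subst; simpl; congruence. Qed.

Lemma Rel_it q p : Rel q p -> interior_turns p = interior_turns q.
Proof.
  induction 1.
  - reflexivity.
  - rewrite !turns_cons, H0, IHRel, (Rel_fd _ _ H); reflexivity.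
  - rewrite (turns_cons x m), (turns_cons m y), (turns_cons a b).
    change (fd (m :: y :: t')) with (Some (psub y m)).
    rewrite H0, H1, (Rel_fd _ _ H), IHRel. unfold tw at 1; rewrite H2; simpl; reflexivity.
Qed.

Lemma Rel_tc q p : Rel q p -> turning_count p = turning_count q.
Proof.
  intros H. pose proof (Rel_it _ _ H). inversion H; subst; simpl in *; auto.
Qed.

Lemma it_snoc_le l x : (interior_turns (l ++ [x]) <= interior_turns l + 1)%nat.
Proof.
  induction l as [|a l IH]; simpl; [lia|].
  destruct l as [|b l]; simpl; [lia|].
  destruct l as [|c l]; simpl in *.
  - destruct (perp a b x); lia.
  - lia.
Qed.

Lemma it_snoc_ge l x : (interior_turns l <= interior_turns (l ++ [x]))%nat.
Proof.
  induction l as [|a l IH]; simpl; [lia|].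
  destruct l as [|b l]; simpl; [lia|].
  destruct l as [|c l]; simpl in *; lia.
Qed.

Lemma tc_snoc_le l x : l <> [] -> (turning_count (l ++ [x]) <= turning_count l + 1)%nat.
Proof.
  intros Hl. pose proof (it_snoc_le l x).
  destruct l as [|a [|b l]]; [congruence| simpl; lia|]. simpl in *. lia.
Qed.

Lemma tc_snoc_ge l x : (turning_count l <= turning_count (l ++ [x]))%nat.
Proof.
  pose proof (it_snoc_ge l x).
  destruct l as [|a [|b l]]; simpl in *; lia.
Qed.
Lemma last_default_gen {A} (l : list A) d1 d2 : l <> [] -> last l d1 = last l d2.
Proof. destruct l; [congruence|]. intros; apply last_default. Qed.
Definition symS (S : shape) := forall x y, edg S x y = edg S y x.
Definition einS (S : shape) := forall x y, edg S x y = true -> In x (pts S) /\ In y (pts S).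

Lemma subdiv_sym S d U a b : symS S -> subdiv S d U a b = subdiv S d U b a.
Proof.
  intros Hs; unfold subdiv; rewrite Hs.
  destruct (edg S b a); simpl; auto. apply Bool.orb_comm.
Qed.

Lemma path_disp_snoc S d U p b : p <> [] ->
  path_disp S d U (p ++ [b]) = padd (path_disp S d U p) (contrib S d U (last p b) b).
Proof.
  induction p as [|a p IH]; [congruence|]. intros _.
  destruct p as [|a' p].
  - simpl. ptZ.
  - change ((a :: a' :: p) ++ [b]) with (a :: ((a' :: p) ++ [b])).
    transitivity (padd (contrib S d U a a') (path_disp S d U ((a'::p)++[b]))); [reflexivity|].
    rewrite IH by congruence. change (last (a::a'::p) b) with (last (a'::p) b).
    change (path_disp S d U (a :: a' :: p)) with (padd (contrib S d U a a') (path_disp S d U (a' :: p))).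
    ptZ.
Qed.

Lemma DR S d U D a0 :
  symS S -> einS S -> connected S -> In a0 (pts S) ->
  (forall w p, In w (pts S) -> path_from_to S p a0 w -> D w = path_disp S d U p) ->
  forall a b, edg S a b = true -> D b = padd (D a) (contrib S d U a b).
Proof.
  intros Hs He Hc Ha0 HD a b Hab.
  destruct (He _ _ Hab) as [Ha Hb].
  destruct (pt_eq_dec a b) as [<-|Hne].
  { unfold contrib; destruct subdiv; ptZ. }
  destruct (Hc _ _ Ha0 Ha) as [pa [[Hne0 [Hnd [Hin Hch]]] [Hhd Hl]]].
  destruct (in_dec pt_eq_dec b pa) as [Hbin|Hbn].
  - apply in_split in Hbin as [p1 [p2 Hpa]].
    assert (Hpa' : pa = (p1 ++ [b]) ++ p2) by (rewrite <- app_assoc; exact Hpa).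
    assert (Hp2 : p2 <> []).
    { intros ->. rewrite Hpa', app_nil_r, last_last in Hl. congruence. }
    assert (Hain : In a p2).
    { destruct (exists_last Hp2) as [p3 [c ->]].
      rewrite Hpa', app_assoc, last_last in Hl. subst c. apply in_or_app; simpl; auto. }
    rewrite Hpa' in Hnd, Hch.
    assert (HpB : path_from_to S (p1 ++ [b]) a0 b).
    { split; [split; [|split; [|split]]|split].
      - destruct p1; discriminate.
      - eapply NoDup_app_remove_r; eauto.
      - intros x Hx; apply Hin; rewrite Hpa'; apply in_or_app; auto.
      - apply chain_app in Hch; tauto.
      - rewrite Hpa' in Hhd. destruct p1; simpl in *; auto.
      - apply last_last. }
    assert (HDb : D b = path_disp S d U (p1 ++ [b])) by (apply HD; auto).
    assert (HpA : path_from_to S ((p1 ++ [b]) ++ [a]) a0 a).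
    { destruct HpB as [[H1 [H2 [H3 H4]]] [H5 H6]].
      split; [split; [|split; [|split]]|split].
      - destruct p1; discriminate.
      - apply NoDup_snoc; auto. eapply NoDup_app_disj; eauto.
      - intros x Hx; apply in_app_or in Hx as [Hx|[<-|[]]]; auto.
      - apply chain_snoc with (d := a0); auto. rewrite H6, Hs; auto.
      - rewrite hd_snoc; auto.
      - apply last_last. }
    assert (HDa : D a = path_disp S d U ((p1 ++ [b]) ++ [a])) by (apply HD; auto).
    rewrite path_disp_snoc in HDa by (destruct p1; discriminate).
    rewrite last_last, <- HDb in HDa.
    unfold contrib in *. rewrite <- (subdiv_sym S d U a b Hs) in HDa.
    destruct subdiv; ptZ.
  - assert (HpB : path_from_to S (pa ++ [b]) a0 b).
    { split; [split; [|split; [|split]]|split].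
      - destruct pa; discriminate.
      - apply NoDup_snoc; auto.
      - intros x Hx; apply in_app_or in Hx as [Hx|[<-|[]]]; auto.
      - apply chain_snoc with (d := a0); auto. rewrite Hl; auto.
      - rewrite hd_snoc; auto.
      - apply last_last. }
    rewrite (HD b _ Hb HpB), path_disp_snoc by auto.
    rewrite (HD a pa Ha) by (split; [split; auto|auto]).
    rewrite (last_default_gen pa b a0) by auto. rewrite Hl. reflexivity.
Qed.
Definition stepP (S S' : shape) (d a0 : pt) (U : list pt) (D : pt -> pt) : Prop :=
    cardinal d /\ In a0 (pts S) /\
    (forall u, In u U -> In u (pts S)) /\
    (forall w p, In w (pts S) -> path_from_to S p a0 w -> D w = path_disp S d U p) /\
    (forall w1 w2, In w1 (pts S) -> In w2 (pts S) -> w1 <> w2 ->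
        ~ collide w1 (D w1) w2 (D w2)) /\
    (forall w u, In w (pts S) -> In u U -> kind2 S d u = false ->
        ~ collide w (D w) (padd u d) (D u)) /\
    (forall u1 u2, In u1 U -> In u2 U -> u1 <> u2 ->
        kind2 S d u1 = false -> kind2 S d u2 = false ->
        ~ collide (padd u1 d) (D u1) (padd u2 d) (D u2)) /\
    (forall w u, In w (pts S) -> In u U -> padd w (D w) <> padd (padd u (D u)) d) /\
    (forall u1 u2, In u1 U -> In u2 U -> u1 <> u2 ->
        padd (padd u1 (D u1)) d <> padd (padd u2 (D u2)) d) /\
    (forall q, In q (pts S') <->
        ((exists w, In w (pts S) /\ q = padd w (D w)) \/
         (exists u, In u U /\ q = padd (padd u (D u)) d))) /\
    (forall x y, edg S' x y = true <->
        ((exists a b, edg S a b = true /\ subdiv S d U a b = false /\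
                      x = padd a (D a) /\ y = padd b (D b)) \/
         (exists u, In u U /\
            ((x = padd u (D u) /\ y = padd (padd u (D u)) d) \/
             (y = padd u (D u) /\ x = padd (padd u (D u)) d))) \/
         (exists u, In u U /\ kind2 S d u = true /\
            ((x = padd (padd u (D u)) d /\ y = padd (padd u d) (D (padd u d))) \/
             (y = padd (padd u (D u)) d /\ x = padd (padd u d) (D (padd u d))))))).

Lemma step_unfold S S' : step S S' -> exists d a0 U D, stepP S S' d a0 U D.
Proof. intros H; exact H. Qed.

Ltac dstep H := destruct H as (Hd & Ha0 & HU & HD & Hc1 & Hc2 & Hc3 & Hf1 & Hf2 & Hpts & Hedg).


Lemma img_inj S S' d a0 U D w1 w2 : stepP S S' d a0 U D -> In w1 (pts S) -> In w2 (pts S) ->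
  padd w1 (D w1) = padd w2 (D w2) -> w1 = w2.
Proof.
  intros H H1 H2 He. dstep H. destruct (pt_eq_dec w1 w2) as [|Hn]; auto.
  exfalso; apply (Hc1 _ _ H1 H2 Hn). exists 1, 1. ptsplit. unfold padd in *; cbn [fst snd] in *.
  repeat split; lia.
Qed.

Lemma nw_inj S S' d a0 U D u1 u2 : stepP S S' d a0 U D -> In u1 U -> In u2 U ->
  padd (padd u1 (D u1)) d = padd (padd u2 (D u2)) d -> u1 = u2.
Proof.
  intros H H1 H2 He. dstep H. destruct (pt_eq_dec u1 u2) as [|Hn]; auto.
  exfalso; apply (Hf2 _ _ H1 H2 Hn He).
Qed.

Lemma E1 S S' d a0 U D a b : stepP S S' d a0 U D -> einS S -> In a (pts S) -> In b (pts S) ->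
  edg S' (padd a (D a)) (padd b (D b)) = true -> edg S a b = true /\ subdiv S d U a b = false.
Proof.
  intros H He Ha Hb E. pose proof H as H'. dstep H'.
  apply Hedg in E as [[a2 [b2 [E1 [E2 [E3 E4]]]]]|[[u [Hu [[E3 E4]|[E3 E4]]]]|[u [Hu [Hk [[E3 E4]|[E3 E4]]]]]]].
  - destruct (He _ _ E1).
    assert (a = a2) by (eapply img_inj; [exact H|..]; eauto).
    assert (b = b2) by (eapply img_inj; [exact H|..]; eauto). subst; auto.
  - exfalso; eapply Hf1; [exact Hb|exact Hu|exact E4].
  - exfalso; eapply Hf1; [exact Ha|exact Hu|exact E4].
  - exfalso; eapply Hf1; [exact Ha|exact Hu|exact E3].
  - exfalso; eapply Hf1; [exact Hb|exact Hu|exact E3].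
Qed.

Lemma E2 S S' d a0 U D u y : stepP S S' d a0 U D -> einS S -> In u U ->
  edg S' (padd (padd u (D u)) d) y = true ->
  y = padd u (D u) \/ (kind2 S d u = true /\ y = padd (padd u d) (D (padd u d))).
Proof.
  intros H He Hu E. pose proof H as H'. dstep H'.
  apply Hedg in E as [[a2 [b2 [E1 [E2 [E3 E4]]]]]|[[u2 [Hu2 [[E3 E4]|[E3 E4]]]]|[u2 [Hu2 [Hk [[E3 E4]|[E3 E4]]]]]]].
  - exfalso. destruct (He _ _ E1). eapply Hf1; [|exact Hu|symmetry; exact E3]; auto.
  - exfalso. eapply Hf1; [apply HU; exact Hu2|exact Hu|symmetry; exact E3].
  - left. assert (u = u2) by (eapply nw_inj; eauto). subst; auto.
  - right. assert (u = u2) by (eapply nw_inj; eauto). subst; auto.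
  - exfalso. unfold kind2 in Hk. destruct (He _ _ Hk).
    eapply Hf1; [|exact Hu|symmetry; exact E4]; auto.
Qed.
Lemma subdiv_true S d U u : In u U -> edg S u (padd u d) = true -> subdiv S d U u (padd u d) = true.
Proof. intros H1 H2; unfold subdiv; rewrite H2, (inb_In _ _ H1), pt_eqb_refl; reflexivity. Qed.

Lemma card_fwd d u : cardinal d -> dotb (psub (padd u d) u) (psub (padd u d) u) = false.
Proof.
  intros [ -> | [ -> | [ -> | -> ] ] ]; unfold dotb, psub, padd; cbn [fst snd];
  apply Z.eqb_neq; lia.
Qed.

Lemma card_bwd d u : cardinal d -> dotb (psub u (padd u d)) (psub u (padd u d)) = false.
Proof.
  intros [ -> | [ -> | [ -> | -> ] ] ]; unfold dotb, psub, padd; cbn [fst snd];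
  apply Z.eqb_neq; lia.
Qed.

Lemma last_cc {A} (a b : A) l d d' : last (a :: b :: l) d = last (b :: l) d'.
Proof. rewrite (last_default b l d' d). reflexivity. Qed.

Definition DRprop S d U (D : pt -> pt) := forall a b, edg S a b = true -> D b = padd (D a) (contrib S d U a b).

Lemma contract S S' d a0 U D : stepP S S' d a0 U D -> symS S -> einS S -> symS S' ->
 forall n rest w, (length rest <= n)%nat -> In w (pts S) ->
 chain S' (padd w (D w) :: rest) -> NoDup (padd w (D w) :: rest) ->
 (forall x, In x rest -> In x (pts S')) ->
 (exists wl, In wl (pts S) /\ last (padd w (D w) :: rest) (padd w (D w)) = padd wl (D wl)) ->
 exists q0, (DRprop S d U D -> Rel (w :: q0) (padd w (D w) :: rest)) /\ chain S (w :: q0) /\ NoDup (w :: q0) /\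
   (forall z, In z q0 -> In z (pts S) /\ In (padd z (D z)) rest) /\
   padd (last (w::q0) w) (D (last (w::q0) w)) = last (padd w (D w) :: rest) (padd w (D w)).
Proof.
  intros Hst Hs He Hs'.
  pose proof Hst as Hst'. dstep Hst'.
  induction n as [|n IH]; intros rest w Hlen Hw Hch Hnd Hin Hlast.
  - destruct rest; [|simpl in Hlen; lia].
    exists []. split; [intros; constructor|split; [simpl; auto|split; [constructor; auto; constructor|split; [|reflexivity]]]].
    intros ? [].
  - destruct rest as [|y rest1].
    { exists []. split; [intros; constructor|split; [simpl; auto|split; [constructor; auto; constructor|split; [|reflexivity]]]].
      intros ? []. }
    destruct Hch as [Hwy Hch].
    assert (Hyin : In y (pts S')) by (apply Hin; left; auto).
    apply Hpts in Hyin as [[w' [Hw' ->]]|[u [Hu ->]]].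
    +
      destruct (E1 _ _ _ _ _ _ _ _ Hst He Hw Hw' Hwy) as [Hww' Hsub].
      inversion Hnd as [|? ? Hn1 Hnd1]; subst.
      destruct (IH rest1 w') as [q1 [HR [Hcq [Hndq [Hzq Hlq]]]]]; auto.
      { simpl in Hlen; lia. }
      { intros x Hx; apply Hin; right; auto. }
      { destruct Hlast as [wl [Hwl Hl]]. exists wl; split; auto.
        rewrite <- Hl. simpl. apply last_default. }
      exists (w' :: q1). split; [|split; [|split; [|split]]].
      * intros HDR. apply R2; auto. pose proof (HDR _ _ Hww') as HDw'. unfold contrib in HDw'; rewrite Hsub in HDw'. ptZ.
      * simpl; split; auto.
      * constructor; auto. intros [E|E].
        -- subst; apply Hn1; left; auto.
        -- apply Hzq in E as [_ E]. apply Hn1; right; auto.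
      * intros z [<-|Hz]; [split; [auto|left; auto]|].
        apply Hzq in Hz as [? ?]; split; auto; right; auto.
      * rewrite (last_cc w w' q1 w w'), Hlq. rewrite (last_cc _ _ _ _ (padd w' (D w'))). reflexivity.
    +
      destruct rest1 as [|z rest2].
      { exfalso. destruct Hlast as [wl [Hwl Hl]]. simpl in Hl. eapply Hf1; [exact Hwl|exact Hu|].
        symmetry; exact Hl. }
      destruct Hch as [Hyz Hch].
      rewrite Hs' in Hwy.
      apply (E2 _ _ _ _ _ _ _ _ Hst He Hu) in Hwy.
      apply (E2 _ _ _ _ _ _ _ _ Hst He Hu) in Hyz.
      inversion Hnd as [|? ? Hn1 Hnd1]; subst.
      inversion Hnd1 as [|? ? Hn2 Hnd2]; subst.
      assert (Hzw : z <> padd w (D w)) by (intros ->; apply Hn1; right; left; auto).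
      assert (HuS : In u (pts S)) by auto.
      destruct Hwy as [Ew|[Hk Ew]]; destruct Hyz as [Ez|[Hk' Ez]].
      * congruence.
      *
        assert (w = u) by (eapply img_inj; [exact Hst|..]; eauto). subst w.
        pose proof Hk' as Hk2. unfold kind2 in Hk2. destruct (He _ _ Hk2) as [_ Hv].
        subst z.
        destruct (IH rest2 (padd u d)) as [q1 [HR [Hcq [Hndq [Hzq Hlq]]]]]; auto.
        { simpl in Hlen; lia. }
        { intros x Hx; apply Hin; right; right; auto. }
        { destruct Hlast as [wl [Hwl Hl]]. exists wl; split; auto.
          rewrite <- Hl. simpl. apply last_default. }
        exists (padd u d :: q1). split; [|split; [|split; [|split]]].
        -- intros HDR. pose proof (HDR _ _ Hk2) as HDv. unfold contrib in HDv.
           rewrite (subdiv_true _ _ _ _ Hu Hk2) in HDv.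
           apply R3; auto; [ptZ|ptZ|apply card_fwd; auto].
        -- simpl; split; auto.
        -- constructor; auto. intros [E|E].
           ++ apply Hzw. rewrite E. reflexivity.
           ++ apply Hzq in E as [_ E]. apply Hn1; right; right; auto.
        -- intros z [<-|Hz]; [split; [auto|right; left; auto]|].
           apply Hzq in Hz as [? ?]; split; auto; right; right; auto.
        -- rewrite (last_cc u _ q1 u (padd u d)), Hlq.
           rewrite !(last_cc _ _ _ _ (padd (padd u d) (D (padd u d)))). reflexivity.
      *
        assert (w = padd u d) by (unfold kind2 in Hk; destruct (He _ _ Hk);
                                  eapply img_inj; [exact Hst|..]; eauto). subst w.
        pose proof Hk as Hk2. unfold kind2 in Hk2.
        subst z.
        destruct (IH rest2 u) as [q1 [HR [Hcq [Hndq [Hzq Hlq]]]]]; auto.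
        { simpl in Hlen; lia. }
        { intros x Hx; apply Hin; right; right; auto. }
        { destruct Hlast as [wl [Hwl Hl]]. exists wl; split; auto.
          rewrite <- Hl. simpl. apply last_default. }
        exists (u :: q1). split; [|split; [|split; [|split]]].
        -- intros HDR. assert (Hk3 : edg S (padd u d) u = true) by (rewrite Hs; auto).
           pose proof (HDR _ _ Hk3) as HDu. unfold contrib in HDu.
           rewrite (subdiv_sym _ _ _ _ _ Hs), (subdiv_true _ _ _ _ Hu Hk2) in HDu.
           apply R3; auto; [ptZ|ptZ|apply card_bwd; auto].
        -- simpl; split; auto. rewrite Hs; auto.
        -- constructor; auto. intros [E|E].
           ++ apply Hzw. rewrite <- E. reflexivity.
           ++ apply Hzq in E as [_ E]. apply Hn1; right; right; auto.
        -- intros z [<-|Hz]; [split; [auto|right; left; auto]|].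
           apply Hzq in Hz as [? ?]; split; auto; right; right; auto.
        -- rewrite (last_cc _ u q1 _ u), Hlq.
           rewrite !(last_cc _ _ _ _ (padd u (D u))). reflexivity.
      * exfalso. apply Hzw. rewrite Ez, Ew. reflexivity.
Qed.
Definition Pk (k : nat) (S : shape) : Prop := forall u0, In u0 (pts S) ->
  exists p, root_to_leaf_path S u0 p /\ (k <= turning_count p)%nat.

Lemma extend S u0 : einS S -> forall n p, (length (pts S) - length p <= n)%nat ->
  is_path S p -> hd u0 p = u0 ->
  exists q, root_to_leaf_path S u0 q /\ (turning_count p <= turning_count q)%nat.
Proof.
  intros He n. induction n as [|n IH]; intros p Hm Hp Hh.
  all: destruct (classic (forall z, edg S (last p u0) z = true -> In z p)) as [Hl|Hl];
    [exists p; split; [split; [|split]|]; auto|].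
  all: apply not_all_ex_not in Hl as [z Hz]; apply imply_to_and in Hz as [Hez Hzn].
  all: destruct Hp as [Hne [Hnd [Hin Hch]]].
  all: assert (Hp' : is_path S (p ++ [z])) by
      (split; [destruct p; discriminate|split; [apply NoDup_snoc; auto|split;
        [intros x Hx; apply in_app_or in Hx as [Hx|[<-|[]]]; auto; apply (He _ _ Hez)
        |apply chain_snoc with (d := u0); auto]]]).
  all: assert (Hlen : (length (p ++ [z]) <= length (pts S))%nat) by
      (apply NoDup_incl_length; [apply Hp'|intros x Hx; apply Hp'; auto]).
  all: rewrite length_app in Hlen; simpl in Hlen.
  - lia.
  - destruct (IH (p ++ [z])) as [q [Hq Hc]]; auto.
    + rewrite length_app; simpl; lia.
    + rewrite hd_snoc; auto.
    + exists q; split; auto. pose proof (tc_snoc_ge p z); lia.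
Qed.

Lemma back_path S S' d a0 U D r rest : stepP S S' d a0 U D -> symS S -> einS S -> connected S -> symS S' ->
  In r (pts S) -> chain S' (padd r (D r) :: rest) -> NoDup (padd r (D r) :: rest) ->
  (forall x, In x rest -> In x (pts S')) ->
  (exists wl, In wl (pts S) /\ last (padd r (D r) :: rest) (padd r (D r)) = padd wl (D wl)) ->
  exists q, root_to_leaf_path S r q /\
    (turning_count (padd r (D r) :: rest) <= turning_count q)%nat.
Proof.
  intros Hst Hs He Hc Hs' Hr Hch Hnd Hin Hl.
  destruct (contract S S' d a0 U D Hst Hs He Hs' (length rest) rest r) as
    [q0 [HR [Hcq [Hndq [Hzq _]]]]]; auto.
  destruct (extend S r He (length (pts S)) (r :: q0)) as [q [Hq Hcnt]]; auto.
  - lia.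
  - split; [discriminate|split; auto; split; auto].
    intros x [<-|Hx]; auto. apply Hzq; auto.
  - exists q; split; auto. pose proof Hst as Hst'. dstep Hst'.
    rewrite (Rel_tc _ _ (HR (DR S d U D a0 Hs He Hc Ha0 HD))); auto.
Qed.

Lemma step_back S S' d a0 U D k : stepP S S' d a0 U D -> symS S -> einS S -> connected S -> symS S' ->
  Pk k S' -> Pk (k - 1) S.
Proof.
  intros Hst Hs He Hc Hs' HP r Hr.
  pose proof Hst as Hst'. dstep Hst'.
  assert (Hr' : In (padd r (D r)) (pts S')) by (apply Hpts; left; eauto).
  destruct (HP _ Hr') as [p' [[[Hne [Hnd [Hin Hch]]] [Hh _]] Hk]].
  destruct p' as [|x rest]; [congruence|]. simpl in Hh; subst x.
  assert (Hlin : In (last (padd r (D r) :: rest) (padd r (D r))) (pts S')).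
  { apply Hin. destruct rest as [|y rest] using rev_ind; [left; auto|].
    rewrite app_comm_cons, last_last. right; apply in_or_app; right; left; auto. }
  apply Hpts in Hlin as [[wl [Hwl Hwle]]|[u [Hu Hue]]].
  - destruct (back_path S S' d a0 U D r rest) as [q [Hq Hcnt]]; eauto.
    + intros x Hx; apply Hin; right; auto.
    + exists q; split; auto. lia.
  - destruct rest as [|y rest0] using rev_ind.
    { exfalso. simpl in Hue. eapply Hf1; [exact Hr|exact Hu|exact Hue]. }
    rewrite app_comm_cons, last_last in Hue. subst y.
    rewrite app_comm_cons in Hch, Hnd, Hk.
    pose proof (tc_snoc_le (padd r (D r) :: rest0) (padd (padd u (D u)) d) ltac:(discriminate)) as Htc.
    pose proof (chain_last _ _ _ (padd r (D r)) Hch ltac:(discriminate)) as Hel.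
    rewrite Hs' in Hel. apply (E2 _ _ _ _ _ _ _ _ Hst He Hu) in Hel.
    destruct (back_path S S' d a0 U D r rest0) as [q [Hq Hcnt]]; eauto.
    + apply chain_app in Hch; tauto.
    + eapply NoDup_app_remove_r; eauto.
    + intros x Hx; apply Hin. rewrite app_comm_cons. apply in_or_app; left; right; auto.
    + destruct Hel as [E|[Hkd E]].
      * exists u; split; auto.
      * exists (padd u d); split; auto. unfold kind2 in Hkd. apply (He _ _ Hkd).
    + exists q; split; auto. lia.
Qed.

Lemma connected_back S S' d a0 U D : stepP S S' d a0 U D -> symS S -> einS S -> symS S' ->
  connected S' -> connected S.
Proof.
  intros Hst Hs He Hs' Hc' a b Ha Hb.
  pose proof Hst as Hst'. dstep Hst'.
  assert (Ha' : In (padd a (D a)) (pts S')) by (apply Hpts; left; eauto).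
  assert (Hb' : In (padd b (D b)) (pts S')) by (apply Hpts; left; eauto).
  destruct (Hc' _ _ Ha' Hb') as [p' [[Hne [Hnd [Hin Hch]]] [Hh Hl]]].
  destruct p' as [|x rest]; [congruence|]. simpl in Hh; subst x.
  destruct (contract S S' d a0 U D Hst Hs He Hs' (length rest) rest a) as
    [q0 [_ [Hcq [Hndq [Hzq Hlq]]]]]; auto.
  all: try (intros x Hx; apply Hin; right; auto).
  all: try (exists b; split; auto; fail).
  exists (a :: q0). assert (Hlq2 : last (a :: q0) a = b).
    { eapply img_inj; [exact Hst| | exact Hb|].
      - destruct q0 as [|z q0'] using rev_ind; [simpl; auto|].
        rewrite app_comm_cons, last_last. apply Hzq. apply in_or_app; right; left; auto.
      - rewrite Hlq. exact Hl. }
    split; [split; [discriminate|split; auto; split; auto]|split; auto].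
    intros x [<-|Hx]; auto. apply Hzq; auto.
Qed.
Lemma fwd S S' d a0 U D : stepP S S' d a0 U D -> symS S -> einS S -> symS S' /\ einS S'.
Proof.
  intros Hst Hs He. pose proof Hst as Hst'. dstep Hst'.
  split.
  - assert (Hi : forall x y, edg S' x y = true -> edg S' y x = true).
    { intros x y E. apply Hedg in E. apply Hedg.
      destruct E as [[a [b [E1 [E2 [E3 E4]]]]]|[[u [Hu E]]|[u [Hu [Hk E]]]]].
      - left. exists b, a. rewrite Hs, subdiv_sym; auto.
      - right; left. exists u; split; auto; tauto.
      - right; right. exists u; split; auto; split; auto; tauto. }
    intros x y. destruct (edg S' x y) eqn:E1; destruct (edg S' y x) eqn:E2; auto.
    + apply Hi in E1; congruence.
    + apply Hi in E2; congruence.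
  - intros x y E. apply Hedg in E.
    destruct E as [[a [b [E1 [E2 [E3 E4]]]]]|[[u [Hu E]]|[u [Hu [Hk E]]]]].
    + destruct (He _ _ E1). subst; split; apply Hpts; left; eauto.
    + assert (In (padd u (D u)) (pts S')) by (apply Hpts; left; eauto).
      assert (In (padd (padd u (D u)) d) (pts S')) by (apply Hpts; right; eauto).
      destruct E as [[-> ->]|[-> ->]]; auto.
    + unfold kind2 in Hk. destruct (He _ _ Hk) as [_ Hv].
      assert (In (padd (padd u d) (D (padd u d))) (pts S')) by (apply Hpts; left; eauto).
      assert (In (padd (padd u (D u)) d) (pts S')) by (apply Hpts; right; eauto).
      destruct E as [[-> ->]|[-> ->]]; auto.
Qed.

Lemma ptK1 x t : psub (padd x t) t = x.
Proof. ptZ. Qed.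
Lemma ptK2 x t : padd (psub x t) t = x.
Proof. ptZ. Qed.

Lemma last_map' {A B} (f : A -> B) l d : last (map f l) (f d) = f (last l d).
Proof. induction l as [|a l IH]; simpl; auto. destruct l; simpl in *; auto. Qed.

Lemma hd_map' {A B} (f : A -> B) l d : hd (f d) (map f l) = f (hd d l).
Proof. destruct l; reflexivity. Qed.

Lemma it_map t p : interior_turns (map (fun x => psub x t) p) = interior_turns p.
Proof.
  induction p as [|a p IH]; [auto|]. destruct p as [|b p]; [auto|].
  destruct p as [|c p]; [auto|].
  change (interior_turns (map (fun x => psub x t) (a :: b :: c :: p))) with
    ((if perp (psub a t) (psub b t) (psub c t) then 1 else 0) +
      interior_turns (map (fun x => psub x t) (b :: c :: p)))%nat.
  rewrite IH.
  assert (E : perp (psub a t) (psub b t) (psub c t) = perp a b c)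
    by (unfold perp, psub; cbn [fst snd]; f_equal; ring).
  rewrite E. reflexivity.
Qed.

Lemma tc_map t p : turning_count (map (fun x => psub x t) p) = turning_count p.
Proof.
  pose proof (it_map t p). destruct p as [|a [|b p]]; simpl in *; auto.
Qed.

Lemma equiv_path S T t p : (forall q, In q (pts S) <-> In (padd q t) (pts T)) ->
  (forall x y, edg S x y = edg T (padd x t) (padd y t)) ->
  is_path T p -> is_path S (map (fun x => psub x t) p).
Proof.
  intros Hp He [Hne [Hnd [Hin Hch]]]. split; [|split; [|split]].
  - destruct p; simpl; congruence.
  - apply FinFun.Injective_map_NoDup; auto. intros x y E.
    rewrite <- (ptK2 x t), <- (ptK2 y t), E; reflexivity.
  - intros x Hx. apply in_map_iff in Hx as [y [<- Hy]]. apply Hp. rewrite ptK2; auto.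
  - clear Hne Hnd Hin. induction p as [|a p IH]; [exact I|].
    destruct p as [|b p]; [exact I|]. destruct Hch as [H1 H2]; split.
    + change (edg S (psub a t) (psub b t) = true). rewrite He, !ptK2; auto.
    + exact (IH H2).
Qed.

Lemma equiv_back S T : shape_equiv S T -> (connected T -> connected S) /\
  (forall k, Pk k T -> Pk k S).
Proof.
  intros [t [Hp He]]. split.
  - intros Hc a b Ha Hb. apply Hp in Ha, Hb.
    destruct (Hc _ _ Ha Hb) as [p [Hpa [Hh Hl]]].
    exists (map (fun x => psub x t) p). split; [apply (equiv_path S T); auto|].
    split.
    + rewrite <- (ptK1 a t) at 1 2. rewrite (hd_map' (fun x => psub x t)), Hh; reflexivity.
    + rewrite <- (ptK1 a t) at 1. rewrite (last_map' (fun x => psub x t)), Hl, ptK1; reflexivity.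
  - intros k HP u0 Hu0. apply Hp in Hu0.
    destruct (HP _ Hu0) as [p [[Hpa [Hh Hlf]] Hk]].
    exists (map (fun x => psub x t) p). split; [split; [|split]|].
    + apply (equiv_path S T); auto.
    + rewrite <- (ptK1 u0 t) at 1 2. rewrite (hd_map' (fun x => psub x t)), Hh; reflexivity.
    + intros z Hz. rewrite <- (ptK1 u0 t) in Hz. rewrite (last_map' (fun x => psub x t)), He, ptK2 in Hz.
      apply Hlf in Hz. apply in_map_iff; exists (padd z t); split; [apply ptK1|auto].
    + rewrite tc_map; auto.
Qed.

Theorem theorem3p4 (T : shape) (k : nat) :
  tree_shape T -> (0 < k)%nat ->
  (forall u0, In u0 (pts T) ->
     exists p, root_to_leaf_path T u0 p /\ (k <= turning_count p)%nat) ->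
  forall tf : nat, grows_from_single T tf -> (k - 1 <= tf)%nat.
Proof.
  intros [[_ [_ HcT]] _] _ HP tf [Sq [H0 [Hstep Heq]]].
  assert (W : forall i, (i <= tf)%nat -> symS (Sq i) /\ einS (Sq i)).
  { induction i as [|i IH]; intros Hi.
    - destruct H0 as [p0 [_ Hf]]. split; intros x y; rewrite ?Hf; auto; discriminate.
    - destruct (IH ltac:(lia)) as [Hs He].
      destruct (step_unfold _ _ (Hstep i ltac:(lia))) as [d [a0 [U [D Hst]]]].
      eapply fwd; eauto. }
  assert (B : forall m, (m <= tf)%nat -> connected (Sq (tf - m)%nat) /\ Pk (k - m)%nat (Sq (tf - m)%nat)).
  { induction m as [|m IH]; intros Hm.
    - rewrite !Nat.sub_0_r. destruct (equiv_back _ _ Heq) as [E1 E2]. split; auto.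
    - destruct (IH ltac:(lia)) as [Hc HPm].
      replace (tf - m)%nat with (S (tf - S m)) in Hc, HPm by lia.
      destruct (step_unfold _ _ (Hstep (tf - S m)%nat ltac:(lia))) as [d [a0 [U [D Hst]]]].
      destruct (W (tf - S m)%nat ltac:(lia)) as [Hs He].
      destruct (W (S (tf - S m))%nat ltac:(lia)) as [Hs' He'].
      assert (Hc0 : connected (Sq (tf - S m)%nat)) by (eapply connected_back; eauto).
      split; auto.
      replace (k - S m)%nat with (k - m - 1)%nat by lia.
      eapply step_back; eauto. }
  destruct (B tf ltac:(lia)) as [_ HP0]. rewrite Nat.sub_diag in HP0.
  destruct H0 as [p0 [Hp0 _]].
  destruct (HP0 p0 ltac:(rewrite Hp0; left; auto)) as [q [[[Hne [Hnd [Hin _]]] _] Hq]].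
  assert (Hlen : (length q <= 1)%nat).
  { change 1%nat with (length [p0]). rewrite <- Hp0. apply NoDup_incl_length; auto. }
  destruct q as [|a [|b q]]; simpl in *; try congruence; lia.
Qed.
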